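(* Let $(X,d,\ll,\le,\tau)$ and $(Y,\widetilde d,\widetilde\ll,\widetilde\le,\widetilde\tau)$ be Lorentzian length spaces. If $(X,d,\ll,\le,\tau)$ is strongly causal, $(Y,\widetilde d)$ is locally compact, and $f:X\to Y$ is a surjective distance homothetic map, then $f$ is a homeomorphism (with respect to the metric topologies) and $(Y,\widetilde d,\widetilde\ll,\widetilde\le,\widetilde\tau)$ is strongly causal.
   Context: A causal space $(X,\ll,\le)$ is a set $X$ with two transitive relations $\ll,\le$ such that $\le$ is reflexive and $x\ll y\Rightarrow x\le y$; write $p<q$ if $p\le q$ and $p\neq q$. Set $I^+(x)=\{y: x\ll y\}$, $I^-(x)=\{y: y\ll x\}$, $J^+(x)=\{y:x\le y\}$, $J^-(x)=\{y:y\le x\}$. A Lorentzian pre-length space $(X,d,\ll,\le,\tau)$ is a causal space together with a metric $d$ on $X$ and a function $\tau:X\times X\to[0,\infty]$ that is lower semicontinuous with respect to the topology of $d$, satisfies $\tau(x,z)\ge\tau(x,y)+\tau(y,z)$ whenever $x\le y\le z$, $\tau(x,y)=0$ if $x\not\le y$, and $\tau(x,y)>0\iff x\ll y$. All topological notions refer to the metric topology of $d$. A future directed causal (resp. timelike) curve is a non-constant Lipschitz map $\gamma:I\to X$ ($I\subset\mathbb R$ an interval) with $\gamma(s)\le\gamma(t)$ (resp. $\gamma(s)\ll\gamma(t)$) for all $s<t$. For a future directed causal $\gamma:[a,b]\to X$, $L_\tau(\gamma)=\inf\sum_{i=0}^{N-1}\tau(\gamma(t_i),\gamma(t_{i+1}))$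 over all partitions $a=t_0<\dots<t_N=b$. The space is causally path connected if whenever $x\le y$ (resp. $x\ll y$) there is a future directed causal (resp. timelike) curve from $x$ to $y$. For open $U\subset X$, $p\le_U q$ means there is a future directed causal curve from $p$ to $q$ with image in $U$. A neighborhood $U$ is causally closed if whenever $p_n\le_U q_n$ with $p_n\to p\in U$, $q_n\to q\in U$, then $p\le_U q$; the space is locally causally closed if every point has a causally closed neighborhood. The space is localizable if every $x$ has a neighborhood $\Omega_x$ such that: (i) all causal curves contained in $\Omega_x$ have uniformly bounded $d$-length; (ii) there is a continuous $\omega_x:\Omega_x\times\Omega_x\to[0,\infty)$ such that $(\Omega_x,d|_{\Omega_x\times\Omega_x},\ll|_{\Omega_x},\le|_{\Omega_x},\omega_x)$ is a Lorentzian pre-length space, and $I^\pm(y)\cap\Omega_x\ne\emptyset$ for every $y\in\Omega_x$; (iii) for all $p,q\in\Omega_x$ with $p<q$ there is a future causal curve $\gamma_{p,q}$ from $p$ to $q$ with $L_\tau(\gamma_{p,q})\ge L_\tau(\gamma)$ for every future causal curve $\gamma\subset\Omega_x$ from $p$ to $q$, and $L_\tau(\gamma_{p,q})=\omega_x(p,q)$. A Lorentzian length space is a causally path connected, locally causally closed, localizable Lorentzian pre-length space with $\tau(x,y)=\sup\{L_\tau(\gamma):\gamma$ a future causal curve from $x$ to $y\}$. Strongly causal: the Alexandrov topology (subbase $\{I^+(x)\cap I^-(y)\}$) coincides with the metric topology. A map $f:X\to Y$ is distance homothetic if there is $c>0$ with $\widetilde\tau(f(p),f(q))=c\,\tau(p,q)$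 for all $p,q\in X$. *)

(* Defs.v *)
From Stdlib Require Import Reals List.
From Coquelicot Require Import Coquelicot.
Open Scope R_scope.

Section LLS.
Context {X : Type}.

Definition is_metric (d : X -> X -> R) : Prop :=
  (forall x y, 0 <= d x y) /\
  (forall x y, d x y = 0 <-> x = y) /\
  (forall x y, d x y = d y x) /\
  (forall x y z, d x z <= d x y + d y z).

Definition open_set (d : X -> X -> R) (U : X -> Prop) : Prop :=
  forall x, U x -> exists e, 0 < e /\ forall y, d x y < e -> U y.

Definition nbhd (d : X -> X -> R) (N : X -> Prop) (x : X) : Prop :=
  exists U, open_set d U /\ U x /\ forall y, U y -> N y.

Definition converges (d : X -> X -> R) (s : nat -> X) (p : X) : Prop :=
  forall e, 0 < e -> exists M, forall n, (M <= n)%nat -> d (s n) p < e.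

Definition compact_set (d : X -> X -> R) (K : X -> Prop) : Prop :=
  forall (I : Type) (U : I -> X -> Prop),
    (forall i, open_set d (U i)) ->
    (forall x, K x -> exists i, U i x) ->
    exists l : list I, forall x, K x -> exists i, In i l /\ U i x.

Definition locally_compact (d : X -> X -> R) : Prop :=
  forall x, exists K, compact_set d K /\ nbhd d K x.

Definition lsc2 (d : X -> X -> R) (tau : X -> X -> Rbar) : Prop :=
  forall x y (r : R), Rbar_lt r (tau x y) ->
    exists e, 0 < e /\ forall x' y', d x x' < e -> d y y' < e -> Rbar_lt r (tau x' y').

Definition causal_space (ll le : X -> X -> Prop) : Prop :=
  (forall x y z, ll x y -> ll y z -> ll x z) /\
  (forall x y z, le x y -> le y z -> le x z) /\
  (forall x, le x x) /\
  (forall x y, ll x y -> le x y).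

Definition LPLS (d : X -> X -> R) (ll le : X -> X -> Prop) (tau : X -> X -> Rbar) : Prop :=
  is_metric d /\ causal_space ll le /\ lsc2 d tau /\
  (forall x y, Rbar_le (Finite 0) (tau x y)) /\
  (forall x y z, le x y -> le y z -> Rbar_le (Rbar_plus (tau x y) (tau y z)) (tau x z)) /\
  (forall x y, ~ le x y -> tau x y = Finite 0) /\
  (forall x y, Rbar_lt (Finite 0) (tau x y) <-> ll x y).

Definition is_interval (I : R -> Prop) : Prop :=
  forall s t u, I s -> I u -> s <= t <= u -> I t.

Definition lipschitz_on (d : X -> X -> R) (I : R -> Prop) (g : R -> X) : Prop :=
  exists L, forall s t, I s -> I t -> d (g s) (g t) <= L * Rabs (s - t).

Definition nonconstant_on (I : R -> Prop) (g : R -> X) : Prop :=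
  exists s t, I s /\ I t /\ g s <> g t.

(** future directed causal curve g : I -> X (g only matters on I) *)
Definition fd_causal_curve (d : X -> X -> R) (le : X -> X -> Prop)
  (I : R -> Prop) (g : R -> X) : Prop :=
  is_interval I /\ lipschitz_on d I g /\ nonconstant_on I g /\
  (forall s t, I s -> I t -> s < t -> le (g s) (g t)).

Definition fd_timelike_curve (d : X -> X -> R) (ll : X -> X -> Prop)
  (I : R -> Prop) (g : R -> X) : Prop :=
  is_interval I /\ lipschitz_on d I g /\ nonconstant_on I g /\
  (forall s t, I s -> I t -> s < t -> ll (g s) (g t)).

Definition cc (a b : R) : R -> Prop := fun t => a <= t <= b.

Definition causal_from_to (d : X -> X -> R) (le : X -> X -> Prop)
  (g : R -> X) (a b : R) (p q : X) : Prop :=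
  a < b /\ fd_causal_curve d le (cc a b) g /\ g a = p /\ g b = q.

Definition timelike_from_to (d : X -> X -> R) (ll : X -> X -> Prop)
  (g : R -> X) (a b : R) (p q : X) : Prop :=
  a < b /\ fd_timelike_curve d ll (cc a b) g /\ g a = p /\ g b = q.

Definition partition (a b : R) (N : nat) (t : nat -> R) : Prop :=
  t O = a /\ t N = b /\ forall i, (i < N)%nat -> t i < t (S i).

Fixpoint rsum (g : nat -> Rbar) (n : nat) : Rbar :=
  match n with O => Finite 0 | S n => Rbar_plus (rsum g n) (g n) end.

Fixpoint sumR (g : nat -> R) (n : nat) : R :=
  match n with O => 0 | S n => sumR g n + g n end.

Definition Ltau (tau : X -> X -> Rbar) (g : R -> X) (a b : R) : Rbar :=
  Rbar_glb (fun v => exists N t, partition a b N t /\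
             v = rsum (fun i => tau (g (t i)) (g (t (S i)))) N).

Definition dlength_le (d : X -> X -> R) (I : R -> Prop) (g : R -> X) (C : R) : Prop :=
  forall N (t : nat -> R), (forall i, (i <= N)%nat -> I (t i)) ->
    (forall i, (i < N)%nat -> t i < t (S i)) ->
    sumR (fun i => d (g (t i)) (g (t (S i)))) N <= C.

End LLS.

Section LLS2.
Context {X : Type}.

Definition causally_path_connected (d : X -> X -> R) (ll le : X -> X -> Prop) : Prop :=
  (forall x y, le x y -> x <> y -> exists g a b, causal_from_to d le g a b x y) /\
  (forall x y, ll x y -> exists g a b, timelike_from_to d ll g a b x y).

Definition le_in (d : X -> X -> R) (le : X -> X -> Prop) (U : X -> Prop) (p q : X) : Prop :=
  p = q \/ exists g a b, causal_from_to d le g a b p q /\ forall s, a <= s <= b -> U (g s).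

Definition causally_closed (d : X -> X -> R) (le : X -> X -> Prop) (U : X -> Prop) : Prop :=
  forall (ps qs : nat -> X) p q,
    (forall n, le_in d le U (ps n) (qs n)) ->
    converges d ps p -> converges d qs q -> U p -> U q -> le_in d le U p q.

Definition locally_causally_closed (d : X -> X -> R) (le : X -> X -> Prop) : Prop :=
  forall x, exists U, open_set d U /\ U x /\ causally_closed d le U.

Definition localizable (d : X -> X -> R) (ll le : X -> X -> Prop) (tau : X -> X -> Rbar) : Prop :=
  forall x, exists (Om : X -> Prop) (om : sig Om -> sig Om -> R),
    nbhd d Om x /\
    (exists C, forall I g, fd_causal_curve d le I g -> (forall s, I s -> Om (g s)) ->
        dlength_le d I g C) /\
    (forall p q (e : R), 0 < e -> exists del, 0 < del /\ forall p' q' : sig Om,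
        d (proj1_sig p) (proj1_sig p') < del -> d (proj1_sig q) (proj1_sig q') < del ->
        Rabs (om p' q' - om p q) < e) /\
    LPLS (fun p q : sig Om => d (proj1_sig p) (proj1_sig q))
         (fun p q : sig Om => ll (proj1_sig p) (proj1_sig q))
         (fun p q : sig Om => le (proj1_sig p) (proj1_sig q))
         (fun p q : sig Om => Finite (om p q)) /\
    (forall y : sig Om, (exists z : sig Om, ll (proj1_sig y) (proj1_sig z)) /\
                        (exists z : sig Om, ll (proj1_sig z) (proj1_sig y))) /\
    (forall p q : sig Om, le (proj1_sig p) (proj1_sig q) -> proj1_sig p <> proj1_sig q ->
       exists g a b, causal_from_to d le g a b (proj1_sig p) (proj1_sig q) /\
         (forall g' a' b', causal_from_to d le g' a' b' (proj1_sig p) (proj1_sig q) ->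
            (forall s, a' <= s <= b' -> Om (g' s)) ->
            Rbar_le (Ltau tau g' a' b') (Ltau tau g a b)) /\
         Ltau tau g a b = Finite (om p q)).

(** tau is the sup of tau-lengths of future causal curves (sup of the empty set := 0) *)
Definition LLS (d : X -> X -> R) (ll le : X -> X -> Prop) (tau : X -> X -> Rbar) : Prop :=
  LPLS d ll le tau /\ causally_path_connected d ll le /\
  locally_causally_closed d le /\ localizable d ll le tau /\
  (forall x y, tau x y = Rbar_lub (fun v => v = Finite 0 \/
      exists g a b, causal_from_to d le g a b x y /\ v = Ltau tau g a b)).

(** Alexandrov topology: subbase I^+(x) /\ I^-(y) *)
Definition alex_open (ll : X -> X -> Prop) (U : X -> Prop) : Prop :=
  forall p, U p -> exists l : list (X * X),
    (forall xy, In xy l -> ll (fst xy) p /\ ll p (snd xy)) /\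
    (forall q, (forall xy, In xy l -> ll (fst xy) q /\ ll q (snd xy)) -> U q).

Definition strongly_causal (d : X -> X -> R) (ll : X -> X -> Prop) : Prop :=
  forall U, alex_open ll U <-> open_set d U.
End LLS2.

Definition continuous_map {X Y : Type} (d : X -> X -> R) (d' : Y -> Y -> R) (f : X -> Y) : Prop :=
  forall V, open_set d' V -> open_set d (fun x => V (f x)).

Definition homeomorphism {X Y : Type} (d : X -> X -> R) (d' : Y -> Y -> R) (f : X -> Y) : Prop :=
  exists g : Y -> X, (forall x, g (f x) = x) /\ (forall y, f (g y) = y) /\
    continuous_map d d' f /\ continuous_map d' d g.

Definition distance_homothetic {X Y : Type} (tau : X -> X -> Rbar) (tau' : Y -> Y -> Rbar)
  (f : X -> Y) : Prop :=
  exists c : R, 0 < c /\ forall p q, tau' (f p) (f q) = Rbar_mult (Finite c) (tau p q).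

(* Main.v *)
Require Import Defs.
From Stdlib Require Import Reals Lra List Classical ClassicalEpsilon.
From Coquelicot Require Import Coquelicot.
Open Scope R_scope.
Require Import Defs.

Lemma Rbar_mult_pos_lt c t : 0 < c -> Rbar_le (Finite 0) t ->
  (Rbar_lt (Finite 0) (Rbar_mult (Finite c) t) <-> Rbar_lt (Finite 0) t).
Proof.
  intros Hc Ht. destruct t as [r| |].
  - simpl. split; intro H; nra.
  - replace (Rbar_mult (Finite c) p_infty) with p_infty; [tauto|].
    unfold Rbar_mult, Rbar_mult'. simpl.
    destruct (Rle_dec 0 c); [|lra]. destruct (Rle_lt_or_eq_dec 0 c r); [reflexivity|lra].
  - simpl in Ht. contradiction.
Qed.

Section Gen.
Context {Z : Type} (d : Z -> Z -> R) (ll : Z -> Z -> Prop) (tau : Z -> Z -> Rbar).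
Hypothesis Hm : is_metric d.
Hypothesis Hlsc : lsc2 d tau.
Hypothesis Hll : forall x y, Rbar_lt (Finite 0) (tau x y) <-> ll x y.

Lemma d_self x : d x x = 0.
Proof. destruct Hm as [_ [H _]]. apply H. reflexivity. Qed.

Lemma lsc_fut a p : ll a p -> exists e, 0 < e /\ forall q, d p q < e -> ll a q.
Proof.
  intro H. apply Hll in H. destruct (Hlsc a p 0 H) as [e [he He]].
  exists e; split; auto. intros q hq. apply Hll. apply He; auto. rewrite d_self; lra.
Qed.

Lemma lsc_past p b : ll p b -> exists e, 0 < e /\ forall q, d p q < e -> ll q b.
Proof.
  intro H. apply Hll in H. destruct (Hlsc p b 0 H) as [e [he He]].
  exists e; split; auto. intros q hq. apply Hll. apply He; auto. rewrite d_self; lra.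
Qed.

Lemma list_open (l : list (Z * Z)) p :
  (forall xy, In xy l -> ll (fst xy) p /\ ll p (snd xy)) ->
  exists e, 0 < e /\ forall q, d p q < e ->
    forall xy, In xy l -> ll (fst xy) q /\ ll q (snd xy).
Proof.
  induction l as [|xy l IH]; intro H.
  - exists 1; split; [lra|]. intros q _ xy [].
  - destruct IH as [e [he He]]. { intros xy' h; apply H; right; auto. }
    destruct (H xy (or_introl eq_refl)) as [h1 h2].
    destruct (lsc_fut _ _ h1) as [e1 [he1 He1]].
    destruct (lsc_past _ _ h2) as [e2 [he2 He2]].
    exists (Rmin e (Rmin e1 e2)). split.
    { apply Rmin_pos; auto. apply Rmin_pos; auto. }
    intros q hq xy' [<-|hin].
    + split; [apply He1|apply He2];
      eapply Rlt_le_trans; eauto; unfold Rmin; repeat destruct Rle_dec; lra.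
    + apply He; auto. eapply Rlt_le_trans; eauto. apply Rmin_l.
Qed.

Lemma alex_open_open U : alex_open ll U -> open_set d U.
Proof.
  intros HU x Ux. destruct (HU x Ux) as [l [H1 H2]].
  destruct (list_open l x H1) as [e [he He]].
  exists e; split; auto.
Qed.

Lemma ball_open c r : open_set d (fun x => d c x < r).
Proof.
  intros x hx. exists (r - d c x). split; [lra|].
  intros y hy. destruct Hm as [_ [_ [_ Ht]]]. specialize (Ht c x y). lra.
Qed.

Lemma dist_lip y u v : Rabs (d y u - d y v) <= d u v.
Proof.
  destruct Hm as [_ [_ [Hs Ht]]].
  pose proof (Ht y u v). pose proof (Ht y v u). rewrite (Hs v u) in H0.
  unfold Rabs; destruct Rcase_abs; lra.
Qed.
End Gen.

Lemma clamp_lip a b s t : Rabs (Rmax a (Rmin b s) - Rmax a (Rmin b t)) <= Rabs (s - t).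
Proof.
  unfold Rmax, Rmin; repeat destruct Rle_dec; unfold Rabs; repeat destruct Rcase_abs; lra.
Qed.

Lemma curve_ivt {Z} (d : Z -> Z -> R) ll (F : Z -> R) g s0 s1 p q lam :
  (forall u v, Rabs (F u - F v) <= d u v) ->
  timelike_from_to d ll g s0 s1 p q ->
  ((F p < lam < F q) \/ (F q < lam < F p)) ->
  exists w, F w = lam /\ ll p w /\ (w = q \/ ll w q).
Proof.
  intros HF [hs [[_ [[L HL] [_ Hll]]] [Hp Hq]]] Hlam.
  set (cl := fun t => Rmax s0 (Rmin s1 t)).
  assert (Hcl : forall t, cc s0 s1 (cl t)).
  { intro t; unfold cc, cl, Rmax, Rmin; repeat destruct Rle_dec; lra. }
  assert (Hcl2 : forall t, s0 <= t <= s1 -> cl t = t).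
  { intros t ht; unfold cl, Rmax, Rmin; repeat destruct Rle_dec; lra. }
  set (phi := fun t => F (g (cl t))).
  assert (Hphi : forall s t, Rabs (phi s - phi t) <= Rabs L * Rabs (s - t)).
  { intros s t. unfold phi. eapply Rle_trans; [apply HF|].
    eapply Rle_trans; [apply HL; apply Hcl|].
    pose proof (clamp_lip s0 s1 s t). fold (cl s) (cl t) in H.
    pose proof (Rabs_pos (cl s - cl t)). pose proof (Rabs_pos L).
    pose proof (Rle_abs L). nra. }
  assert (Hc : forall k, continuity (fun t => k * (phi t - lam))).
  { intros k x eps heps. exists (eps / ((Rabs k + 1) * (Rabs L + 1))).
    pose proof (Rabs_pos L). pose proof (Rabs_pos k).
    split. { apply Rdiv_lt_0_compat; nra. }
    intros x' [_ hx']. change (Rabs (x' - x) < eps / ((Rabs k + 1) * (Rabs L + 1))) in hx'.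
    change (Rabs (k * (phi x' - lam) - k * (phi x - lam)) < eps).
    replace (k * (phi x' - lam) - k * (phi x - lam)) with (k * (phi x' - phi x)) by ring. rewrite Rabs_mult. pose proof (Hphi x' x).
    set (a := eps / ((Rabs k + 1) * (Rabs L + 1))) in *.
    assert (ha : a * ((Rabs k + 1) * (Rabs L + 1)) = eps).
    { unfold a; field; nra. }
    pose proof (Rabs_pos (x' - x)). pose proof (Rabs_pos (phi x' - phi x)).
    assert (Rabs (phi x' - phi x) <= Rabs L * a) by nra.
    assert (Rabs k * Rabs (phi x' - phi x) <= Rabs k * (Rabs L * a)) by nra.
    assert (0 < a) by nra. nra. }
  assert (E0 : phi s0 = F p) by (unfold phi; rewrite Hcl2 by lra; now rewrite Hp).
  assert (E1 : phi s1 = F q) by (unfold phi; rewrite Hcl2 by lra; now rewrite Hq).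
  assert (Hz : exists z, s0 <= z <= s1 /\ phi z = lam).
  { destruct Hlam as [Hl|Hl].
    - destruct (IVT (fun t => 1 * (phi t - lam)) s0 s1 (Hc 1) hs) as [z [hz1 hz2]];
      simpl; try lra. exists z; split; auto. lra.
    - destruct (IVT (fun t => -1 * (phi t - lam)) s0 s1 (Hc (-1)) hs) as [z [hz1 hz2]];
      simpl; try lra. exists z; split; auto. lra. }
  destruct Hz as [z [hz hz']].
  assert (hz0 : s0 < z).
  { destruct (Req_dec z s0) as [->|]; [|lra]. lra. }
  exists (g z). unfold phi in hz'. rewrite Hcl2 in hz' by lra. split; auto.
  split.
  - rewrite <- Hp. apply Hll; unfold cc; lra.
  - destruct (Req_dec z s1) as [->|]; [left; auto|right].
    rewrite <- Hq. apply Hll; unfold cc; lra.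
Qed.

Theorem theorem4p4 (X Y : Type)
  (d : X -> X -> R) (ll le : X -> X -> Prop) (tau : X -> X -> Rbar)
  (d' : Y -> Y -> R) (ll' le' : Y -> Y -> Prop) (tau' : Y -> Y -> Rbar)
  (f : X -> Y) :
  LLS d ll le tau -> LLS d' ll' le' tau' ->
  strongly_causal d ll -> locally_compact d' ->
  (forall y, exists x, f x = y) -> distance_homothetic tau tau' f ->
  homeomorphism d d' f /\ strongly_causal d' ll'.
Proof.
  intros HX HY SC LC Hsurj [c [Hc Hf]].
  destruct HX as [[HmX [[HtrX _] [HlscX [Hnn [_ [_ HllX]]]]]] [HcpcX [_ [HlocX _]]]].
  destruct HY as [[HmY [[HtrY _] [HlscY [_ [_ [_ HllY]]]]]] [HcpcY _]].
  assert (H1 : forall p q, ll' (f p) (f q) <-> ll p q).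
  { intros p q. rewrite <- HllY, <- HllX, Hf. apply Rbar_mult_pos_lt; auto. }
  pose proof (d_self d HmX) as dsX. pose proof (d_self d' HmY) as dsY.
  assert (Hinj : forall p q, f p = f q -> p = q).
  { intros p q E. apply NNPP; intro Hpq.
    assert (Ho : open_set d (fun z => z <> q)).
    { intros x hx. exists (d x q). destruct HmX as [Hp [Hz [Hs _]]].
      split. { destruct (Hp x q); auto. exfalso; apply hx, Hz; auto. }
      intros y hy ->. lra. }
    apply SC in Ho. destruct (Ho p Hpq) as [l [Hl1 Hl2]].
    apply (Hl2 q); [|reflexivity]. intros xy hin.
    destruct (Hl1 xy hin) as [h1 h2]. split.
    - apply H1. rewrite <- E. apply H1; auto.
    - apply H1. rewrite <- E. apply H1; auto. }
  pose (g := fun y => proj1_sig (constructive_indefinite_description _ (Hsurj y))).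
  assert (Hfg : forall y, f (g y) = y).
  { intro y. unfold g. destruct (constructive_indefinite_description _ (Hsurj y)); auto. }
  assert (Hgf : forall x, g (f x) = x) by (intro x; apply Hinj; auto).
  clearbody g.
  assert (Hll' : forall u v, ll' u v <-> ll (g u) (g v)).
  { intros u v. rewrite <- H1, !Hfg. tauto. }
  assert (Hgc : continuous_map d' d g).
  { intros V HV y Vgy. apply SC in HV. destruct (HV (g y) Vgy) as [l [Hl1 Hl2]].
    destruct (list_open d' ll' tau' HmY HlscY HllY
       (map (fun xy => (f (fst xy), f (snd xy))) l) y) as [e [he He]].
    { intros xy' hin. apply in_map_iff in hin. destruct hin as [xy [<- hin]]. simpl.
      rewrite !Hll', !Hgf. auto. }
    exists e; split; auto. intros q hq. apply Hl2. intros xy hin.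
    destruct (He q hq (f (fst xy), f (snd xy))) as [h1 h2].
    { apply in_map_iff. exists xy; auto. }
    simpl in h1, h2. rewrite Hll', Hgf in h1. rewrite Hll', Hgf in h2. auto. }
  assert (Hfc : continuous_map d d' f).
  { intros V HV x0 Vfx0. set (y := f x0) in *.
    apply NNPP; intro Hno.
    assert (Hseq : forall e, 0 < e -> exists x, d x0 x < e /\ ~ V (f x)).
    { intros e he. apply NNPP; intro H'. apply Hno. exists e; split; auto.
      intros x hx. apply NNPP; intro hv. apply H'. exists x; auto. }
    destruct (LC y) as [K [HK [U0 [HU0 [U0y HU0K]]]]].
    destruct (HU0 y U0y) as [e0 [he0 He0]].
    destruct (HV y Vfx0) as [eV [heV HeV]].
    set (R0 := Rmin e0 eV / 2).
    assert (hR0 : 0 < R0) by (unfold R0; pose proof (Rmin_pos e0 eV he0 heV); lra).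
    assert (hR1 : R0 < e0) by (unfold R0; pose proof (Rmin_l e0 eV); lra).
    assert (hR2 : R0 < eV) by (unfold R0; pose proof (Rmin_r e0 eV); lra).
    assert (Claim : exists del, 0 < del /\ forall w, K w -> R0/2 <= d' y w -> del <= d x0 (g w)).
    { set (S := fun w => K w /\ R0/2 <= d' y w).
      set (Ucov := fun (i : option (sig S)) => match i with
         | None => fun z => d' y z < R0/2
         | Some w => fun z => d (g (proj1_sig w)) (g z) < d x0 (g (proj1_sig w)) / 2 end).
      assert (Hpos : forall w, S w -> 0 < d x0 (g w)).
      { intros w [_ hw]. destruct HmX as [Hp [Hz _]]. destruct (Hp x0 (g w)) as [h|h]; auto.
        symmetry in h. apply Hz in h. exfalso. assert (w = y) by (unfold y; rewrite h; auto).
        subst w. rewrite dsY in hw. lra. }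
      destruct (HK (option (sig S)) Ucov) as [lst Hlst].
      { intros [w|]; simpl.
        - apply (Hgc (fun x => d (g (proj1_sig w)) x < d x0 (g (proj1_sig w)) / 2)).
          apply ball_open; auto.
        - apply ball_open; auto. }
      { intros z Kz. destruct (Rlt_le_dec (d' y z) (R0/2)) as [h|h].
        - exists None; simpl; auto.
        - assert (Sz : S z) by (split; auto). exists (Some (exist _ z Sz)); simpl.
          rewrite dsX. pose proof (Hpos z Sz). lra. }
      set (del := fold_right (fun (i : option (sig S)) acc => match i with None => acc
                    | Some w => Rmin (d x0 (g (proj1_sig w)) / 2) acc end) 1 lst).
      assert (Hdel : 0 < del /\ forall w, In (Some w) lst -> del <= d x0 (g (proj1_sig w)) / 2).
      { unfold del; clear Hlst; induction lst as [|[w|] lst IH]; simpl.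
        - split; [lra|]. intros w [].
        - destruct IH as [IH1 IH2]. pose proof (Hpos _ (proj2_sig w)). split.
          + apply Rmin_pos; lra.
          + intros w' [E|hin].
            * inversion E; subst. apply Rmin_l.
            * eapply Rle_trans; [apply Rmin_r|]. auto.
        - destruct IH as [IH1 IH2]. split; auto. intros w [E|hin]; [discriminate|auto]. }
      destruct Hdel as [Hdel1 Hdel2].
      exists del; split; auto. intros w Kw hw.
      destruct (Hlst w Kw) as [[w1|] [hin hU]]; simpl in hU; [|lra].
      specialize (Hdel2 w1 hin).
      destruct HmX as [_ [_ [Hs Ht]]]. pose proof (Ht x0 (g w) (g (proj1_sig w1))).
      rewrite (Hs (g w)) in H. lra. }
    destruct Claim as [del [hdel Hdel]].
    assert (HB : alex_open ll (fun x => d x0 x < del)) by (apply SC; apply ball_open; auto).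
    destruct (HB x0) as [l [Hl1 Hl2]]; [rewrite dsX; auto|].
    set (N := fun q => forall xy, In xy l -> ll (fst xy) q /\ ll q (snd xy)).
    destruct (list_open d ll tau HmX HlscX HllX l x0 Hl1) as [eN [heN HeN]].
    destruct (HlocX x0) as [Om [om [[U1 [_ [U1x HU1]]] [_ [_ [_ [Hpast _]]]]]]].
    destruct (Hpast (exist _ x0 (HU1 x0 U1x))) as [_ [z hz]]. simpl in hz.
    destruct (proj2 HcpcX _ _ hz) as [sig0 [al [be [hab [[_ [[L HL] [_ Hsll]]] [Ha Hb]]]]]].
    set (k := eN / (2 * (Rabs L + 1))).
    assert (hk : 0 < k) by (unfold k; pose proof (Rabs_pos L); apply Rdiv_lt_0_compat; lra).
    assert (hk2 : k * (2 * (Rabs L + 1)) = eN) by (unfold k; pose proof (Rabs_pos L); field; lra).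
    set (t := Rmax al (be - k)).
    assert (ht : al <= t < be) by (unfold t, Rmax; destruct Rle_dec; lra).
    set (a := sig0 t).
    assert (Hax0 : ll a x0) by (rewrite <- Hb; apply Hsll; unfold cc; lra).
    assert (HNa : N a).
    { intros xy hin. apply (HeN a); [|exact hin]. destruct HmX as [_ [_ [Hs _]]]. rewrite (Hs x0 a). unfold a. rewrite <- Hb.
      eapply Rle_lt_trans; [apply HL; unfold cc; lra|].
      assert (be - t <= k) by (unfold t, Rmax; destruct Rle_dec; lra).
      rewrite Rabs_left by lra. pose proof (Rle_abs L). pose proof (Rabs_pos L). nra. }
    destruct (lsc_fut d ll tau HmX HlscX HllX a x0 Hax0) as [ea [hea Hea]].
    destruct (Hseq (Rmin eN ea)) as [x1 [hx1 Vx1]]; [apply Rmin_pos; auto|].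
    assert (HNx1 : N x1) by (intros xy hin; apply (HeN x1); [eapply Rlt_le_trans; [eauto|apply Rmin_l]|exact hin]).
    assert (Hax1 : ll a x1) by (apply Hea; eapply Rlt_le_trans; [eauto|apply Rmin_r]).
    assert (Hkey : forall w xm, ll' (f a) w -> (w = f xm \/ ll' w (f xm)) -> N xm -> N (g w)).
    { intros w xm h1 h2 hN xy hin. destruct (hN xy hin) as [n1 n2].
      destruct (HNa xy hin) as [m1 m2]. rewrite Hll', Hgf in h1. split.
      - eapply HtrX; eauto.
      - destruct h2 as [->|h2].
        + rewrite Hgf; auto.
        + rewrite Hll', Hgf in h2. eapply HtrX; eauto. }
    assert (Hlip : forall u v, Rabs (d' y u - d' y v) <= d' u v) by (apply dist_lip; auto).
    assert (HNx0 : N x0) by exact Hl1.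
    destruct (Rlt_le_dec (R0/2) (d' y (f a))) as [hc|hc].
    - destruct (proj2 HcpcY (f a) y) as [gm [s0 [s1 Hgm]]]; [apply H1; auto|].
      destruct (curve_ivt d' ll' (d' y) gm s0 s1 (f a) y (R0/2) Hlip Hgm) as [w [hw1 [hw2 hw3]]].
      { right. rewrite dsY. lra. }
      assert (Nw : N (g w)) by (apply (Hkey w x0); auto).
      assert (d x0 (g w) < del) by (apply Hl2; exact Nw).
      assert (del <= d x0 (g w)).
      { apply Hdel; [|lra]. apply HU0K, He0. lra. }
      lra.
    - assert (hz1 : R0 <= d' y (f x1)).
      { destruct (Rlt_le_dec (d' y (f x1)) R0) as [h|h]; auto. exfalso; apply Vx1, HeV. lra. }
      destruct (proj2 HcpcY (f a) (f x1)) as [gm [s0 [s1 Hgm]]]; [apply H1; auto|].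
      destruct (curve_ivt d' ll' (d' y) gm s0 s1 (f a) (f x1) (3*R0/4) Hlip Hgm) as [w [hw1 [hw2 hw3]]].
      { left. lra. }
      assert (Nw : N (g w)) by (apply (Hkey w x1); auto).
      assert (d x0 (g w) < del) by (apply Hl2; exact Nw).
      assert (del <= d x0 (g w)).
      { apply Hdel; [|lra]. apply HU0K, He0. lra. }
      lra. }
  split.
  - exists g. auto.
  - intro U. split.
    + apply alex_open_open with tau'; auto.
    + intros HU y Uy. assert (HA : alex_open ll (fun x => U (f x))) by (apply SC, Hfc, HU).
      destruct (HA (g y)) as [l [Hl1 Hl2]]; [rewrite Hfg; auto|].
      exists (map (fun xy => (f (fst xy), f (snd xy))) l). split.
      * intros xy' hin. apply in_map_iff in hin. destruct hin as [xy [<- hin]]. simpl.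
        rewrite !Hll', !Hgf. auto.
      * intros q Hq. rewrite <- (Hfg q). apply Hl2. intros xy hin.
        destruct (Hq (f (fst xy), f (snd xy))) as [h1 h2].
        { apply in_map_iff. exists xy; auto. }
        simpl in h1, h2. rewrite Hll', Hgf in h1. rewrite Hll', Hgf in h2. auto.
Qed.
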